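(* Let $F:\mathbb{R}^n\rightrightarrows\mathbb{R}^n$ be continuous with $F(x)$ nonempty, compact and convex for all $x$, and assume $\Sigma:\dot x\in F(x)$ is forward complete. Let $X_o\subset\mathbb{R}^n$, let $\bar\epsilon:\mathbb{R}^n\to\mathbb{R}_{>0}$ be continuous, and let $K_{\bar\epsilon}$ be the reachable set defined below. Then for each continuous $\epsilon:\mathbb{R}^n\to\mathbb{R}_{\ge0}$ with $\epsilon(x)<\bar\epsilon(x)$ for all $x\in\mathbb{R}^n$: (P1) $\mathrm{cl}(K_{\bar\epsilon})$ is forward contractive for $\Sigma_\epsilon$; (P2) $\mathbb{R}^n\setminus\mathrm{int}(K_{\bar\epsilon})$ is forward contractive for $\Sigma^-_\epsilon$; (P3) solutions of $\Sigma_\epsilon$ starting in $\mathrm{int}(K_{\bar\epsilon})$ never reach $\partial K_{\bar\epsilon}$ at positive times; (P4) solutions of $\Sigma_\epsilon$ starting in $\mathbb{R}^n\setminus\mathrm{cl}(K_{\bar\epsilon})$ never reach $\partial K_{\bar\epsilon}$ at negative times.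
   Context: $\mathbb{B}$ is the closed unit ball. Continuity of a set-valued map means upper and lower semicontinuity. Solutions of a differential inclusion are locally absolutely continuous functions on an interval containing $0$ (possibly including negative times) satisfying the inclusion a.e.; maximal solutions are non-extendable; $\mathcal{S}_{\Sigma'}(x)$ is the set of maximal solutions of $\Sigma'$ with $\phi(0)=x$. Forward complete: every maximal solution is defined on an interval unbounded to the right. $\Sigma_\epsilon$: $\dot x\in F(x)+\epsilon(x)\mathbb{B}$; $\Sigma^-_\epsilon$: $\dot x\in -F(x)+\epsilon(x)\mathbb{B}$. For $t\ge0$, $R_{\Sigma'}(t,x):=\{\phi(s):\phi\in\mathcal{S}_{\Sigma'}(x),\ s\in\mathrm{dom}\,\phi\cap[0,t]\}$. $K_{\bar\epsilon}:=\bigcup_{t\ge0}\bigcup_{x\in X_o}R_{\Sigma_{\bar\epsilon}}(t,x)$. A closed set $K$ is forward invariant for $\Sigma'$ if every solution starting in $K$ stays in $K$; it is forward contractive if it is forward invariant and for every $x_o\in\partial K$ and $\phi\in\mathcal{S}_{\Sigma'}(x_o)$ there is $T>0$ with $\phi(t)\in\mathrm{int}(K)$ for all $t\in\mathrm{dom}\,\phi\cap(0,T]$. *)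

(* Defs.v *)
From HB Require Import structures.
From mathcomp Require Import all_boot all_order all_algebra.
From mathcomp Require Import all_classical all_reals all_analysis.
Set Implicit Arguments. Unset Strict Implicit. Unset Printing Implicit Defensive.
Import Order.TTheory GRing.Theory Num.Theory.
Import numFieldNormedType.Exports.
Local Open Scope classical_set_scope.
Local Open Scope ring_scope.

Section Defs.
Variables (R : realType) (n : nat).
Local Notation V := 'rV[R]_n.

Definition enorm (v : V) : R := Num.sqrt (\sum_(i < n) v ord0 i ^+ 2).

Definition unit_ball : set V := [set v | enorm v <= 1].

Definition convex_set_rV (A : set V) : Prop :=
  forall a b, A a -> A b -> forall l : R, 0 <= l <= 1 -> A ((1 - l) *: a + l *: b).

Definition usc (F : V -> set V) : Prop :=
  forall x (U : set V), open U -> F x `<=` U -> \forall y \near x, F y `<=` U.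
Definition lsc (F : V -> set V) : Prop :=
  forall x (U : set V), open U -> F x `&` U !=set0 ->
    \forall y \near x, F y `&` U !=set0.
Definition sv_continuous (F : V -> set V) : Prop := usc F /\ lsc F.

Definition inflate (G : V -> set V) (e : V -> R) : V -> set V :=
  fun x => [set y + e x *: b | y in G x & b in unit_ball].
Definition negmap (G : V -> set V) : V -> set V := fun x => [set - y | y in G x].

Definition abs_cont_on (a b : R) (phi : R -> V) : Prop :=
  forall e : R, 0 < e -> exists2 d : R, 0 < d &
    forall (m : nat) (s t : 'I_m -> R),
      (forall k, a <= s k /\ s k <= t k /\ t k <= b) ->
      (forall k l, k != l -> t k <= s l \/ t l <= s k) ->
      \sum_(k < m) (t k - s k) < d ->
      \sum_(k < m) enorm (phi (t k) - phi (s k)) < e.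

Definition is_solution (G : V -> set V) (D : set R) (phi : R -> V) : Prop :=
  [/\ is_interval D, D 0,
      (forall a b, a <= b -> `[a, b] `<=` D -> abs_cont_on a b phi) &
      {ae (@lebesgue_measure R), forall t, D t ->
          derivable phi t 1 /\ G (phi t) ('D_1 phi t)}].

Definition maximal_solution (G : V -> set V) (x : V) (D : set R) (phi : R -> V) : Prop :=
  [/\ is_solution G D phi, phi 0 = x &
      ~ exists D' psi, [/\ is_solution G D' psi, D `<` D' &
                          forall t, D t -> psi t = phi t]].

Definition forward_complete (G : V -> set V) : Prop :=
  forall x D phi, maximal_solution G x D phi -> forall M : R, exists t, D t /\ M < t.

Definition reach (G : V -> set V) (t : R) (x : V) : set V :=
  [set y | exists D phi, maximal_solution G x D phi /\
                         exists s, [/\ D s, 0 <= s, s <= t & y = phi s]].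

Definition Kset (F : V -> set V) (ebar : V -> R) (Xo : set V) : set V :=
  [set y | exists t, 0 <= t /\ exists2 x, Xo x & reach (inflate F ebar) t x y].

Definition boundary (A : set V) : set V := closure A `\` interior A.

Definition forward_invariant (G : V -> set V) (K : set V) : Prop :=
  forall D phi, is_solution G D phi -> K (phi 0) -> forall t, D t -> 0 <= t -> K (phi t).

Definition forward_contractive (G : V -> set V) (K : set V) : Prop :=
  [/\ closed K, forward_invariant G K &
      forall x0, boundary K x0 -> forall D phi, maximal_solution G x0 D phi ->
        exists2 T : R, 0 < T & forall t, D t -> 0 < t -> t <= T -> interior K (phi t)].

End Defs.

(* Main.v *)
Require Import Defs.
From HB Require Import structures.
From mathcomp Require Import all_boot all_order all_algebra.
From mathcomp Require Import all_classical all_reals all_analysis.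
From mathcomp Require Import ring lra measurable_realfun.
Import Order.TTheory GRing.Theory Num.Theory.
Import numFieldNormedType.Exports.
Local Open Scope classical_set_scope.
Local Open Scope ring_scope.


Section E.
Context {R : realType} {n : nat}.
Local Notation V := 'rV[R]_n.
Implicit Types u v : V.

Let S v := \sum_(i < n) v ord0 i ^+ 2.
Lemma S_ge0 v : 0 <= S v.
Proof. by apply: sumr_ge0 => i _; rewrite sqr_ge0. Qed.

Lemma enormE v : enorm v = Num.sqrt (S v). Proof. by []. Qed.

Lemma enorm_ge0 v : 0 <= enorm v.
Proof. exact: sqrtr_ge0. Qed.

Lemma enorm_sqr v : enorm v ^+ 2 = S v.
Proof. by rewrite enormE sqr_sqrtr // S_ge0. Qed.

Lemma enormZ a v : enorm (a *: v) = `|a| * enorm v.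
Proof.
rewrite !enormE.
have -> : S (a *: v) = a ^+ 2 * S v.
  rewrite /S mulr_sumr; apply: eq_bigr => i _; rewrite mxE; ring.
by rewrite sqrtrM ?sqr_ge0 // sqrtr_sqr.
Qed.

Lemma enormN v : enorm (- v) = enorm v.
Proof. by rewrite -scaleN1r enormZ normrN normr1 mul1r. Qed.

Lemma enorm0 : enorm (0 : V) = 0.
Proof. by rewrite -(scale0r (0:V)) enormZ normr0 mul0r. Qed.

Lemma S_eq0 v : S v = 0 -> forall i, v ord0 i = 0.
Proof.
move=> /eqP; rewrite psumr_eq0 => [/allP H i|i _]; last by rewrite sqr_ge0.
by have /(_ (mem_index_enum i)) := H i; rewrite implyTb sqrf_eq0 => /eqP.
Qed.

Lemma cauchy_schwarz u v :
  \sum_(i < n) u ord0 i * v ord0 i <= enorm u * enorm v.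
Proof.
have [u0|] := eqVneq (S u) 0.
  under eq_bigr => i _ do rewrite (S_eq0 _ u0) mul0r.
  by rewrite big1 // mulr_ge0 // enorm_ge0.
have [v0|] := eqVneq (S v) 0.
  under eq_bigr => i _ do rewrite (S_eq0 _ v0) mulr0.
  by rewrite big1 // mulr_ge0 // enorm_ge0.
move=> Sv0 Su0.
set a := enorm u; set b := enorm v.
have a0 : 0 < a.
  by rewrite lt_neqAle enorm_ge0 andbT eq_sym /a enormE sqrtr_eq0 -ltNge lt_neqAle eq_sym Su0 S_ge0.
have b0 : 0 < b.
  by rewrite lt_neqAle enorm_ge0 andbT eq_sym /b enormE sqrtr_eq0 -ltNge lt_neqAle eq_sym Sv0 S_ge0.
have H : 0 <= \sum_(i < n) (b * u ord0 i - a * v ord0 i) ^+ 2.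
  by apply: sumr_ge0 => i _; rewrite sqr_ge0.
have E : \sum_(i < n) (b * u ord0 i - a * v ord0 i) ^+ 2 =
   b ^+ 2 * S u - 2 * a * b * (\sum_(i < n) u ord0 i * v ord0 i) + a ^+ 2 * S v.
  rewrite /S !mulr_sumr -sumrB -big_split /=; apply: eq_bigr => i _; ring.
move: H; rewrite E -/(S u) -/(S v) -(enorm_sqr u) -(enorm_sqr v) -/a -/b => H.
have : 2 * a * b * (\sum_(i < n) u ord0 i * v ord0 i) <= 2 * a * b * (a * b).
  by lra.
by rewrite ler_pM2l // !mulr_gt0.
Qed.

Lemma enormD u v : enorm (u + v) <= enorm u + enorm v.
Proof.
rewrite -(@ler_pXn2r _ 2) ?nnegrE ?addr_ge0 ?enorm_ge0 //.
rewrite enorm_sqr.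
have -> : S (u + v) = S u + S v + 2 * \sum_(i < n) u ord0 i * v ord0 i.
  rewrite /S mulr_sumr -!big_split /=; apply: eq_bigr => i _; rewrite mxE; ring.
have := cauchy_schwarz u v.
rewrite -(enorm_sqr u) -(enorm_sqr v); nra.
Qed.

Lemma enormB u v : enorm (u - v) <= enorm u + enorm v.
Proof. by rewrite (le_trans (enormD _ _)) // enormN. Qed.

Lemma enorm_coord v i : `|v ord0 i| <= enorm v.
Proof.
rewrite -sqrtr_sqr enormE ler_wsqrtr // /S (bigD1 i) //= lerDl.
by apply: sumr_ge0 => j _; rewrite sqr_ge0.
Qed.

Lemma mxnorm_le_enorm v : `|v| <= enorm v.
Proof.
rewrite /Num.norm /= mx_normrE.
apply: bigmax_le; first exact: enorm_ge0.
move=> [i j] _ /=; rewrite (ord1 i); exact: enorm_coord.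
Qed.

Lemma coord_le_mxnorm v i : `|v ord0 i| <= `|v|.
Proof.
rewrite /Num.norm /= mx_normrE.
exact: (le_bigmax 0 (fun ij : 'I_1 * 'I_n => `|v ij.1 ij.2|) (ord0, i)).
Qed.

Lemma enorm_le_mxnorm v : enorm v <= n%:R * `|v|.
Proof.
have h0 : 0 <= `|v| by [].
rewrite enormE -(@ler_pXn2r _ 2) ?nnegrE ?sqrtr_ge0 ?mulr_ge0 //.
rewrite sqr_sqrtr ?S_ge0 //.
apply: (@le_trans _ _ (\sum_(i < n) `|v| ^+ 2)).
  apply: ler_sum => i _; rewrite -real_normK ?num_real //.
  by rewrite lerXn2r ?nnegrE // coord_le_mxnorm.
rewrite sumr_const card_ord -mulr_natl exprMn.
have hn : (n%:R : R) <= n%:R ^+ 2.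
  case: n => [|k]; first by rewrite expr0n.
  by rewrite expr2 -natrM ler_nat leq_pmull.
have h2 : 0 <= `|v| ^+ 2 by rewrite sqr_ge0.
by rewrite mulr_natl; nra.
Qed.

End E.

Section M.
Context {R : realType}.
Local Notation l := (@wlength R idfun).

Lemma wl_open_eq (a b a' b' : R) : b - a = b' - a' ->
  l `]a, b[%classic = l `]a', b'[%classic.
Proof.
move=> e.
have [ab|ba] := leP a b.
  have a'b' : a' <= b' by rewrite -subr_ge0 -e subr_ge0.
  by rewrite !wlength_itv_bnd //= e.
have b'a' : b' < a' by rewrite -subr_lt0 -e subr_lt0.
have E1 : `]a, b[%classic = set0 :> set R.
  by apply/seteqP; split => x //=; rewrite in_itv /= => /andP[]; move=> h1 h2; lra.
have E2 : `]a', b'[%classic = set0 :> set R.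
  by apply/seteqP; split => x //=; rewrite in_itv /= => /andP[]; move=> h1 h2; lra.
by rewrite E1 E2.
Qed.

Lemma outer_pre (N : set R) (c s : R) : (s = 1 \/ s = -1) ->
  ((l^* [set t | N (c + s * t)%R])%mu <= (l^* N)%mu)%E.
Proof.
move=> hs; rewrite !outer_measure_open_itv_cover.
apply: ereal_inf_le_tmp => _ [F [Fitv NF] <-].
exists (fun k => [set t | F k (c + s * t)]).
  split.
  - move=> k; have [[a b] /= ->] := Fitv k.
    case: hs => ->.
    + exists (a - c, b - c); apply/seteqP; split => x /=; rewrite !in_itv /= => /andP[h1 h2];
        apply/andP; split; lra.
    + exists (c - b, c - a); apply/seteqP; split => x /=; rewrite !in_itv /= => /andP[h1 h2];
        apply/andP; split; lra.
  - by move=> t /= /NF.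
apply: eq_eseriesr => k _.
have [[a b] /= ->] := Fitv k.
case: hs => ->.
- have -> : [set t | `]a, b[%classic (c + 1 * t)] = `]a - c, b - c[%classic.
    by apply/seteqP; split => x /=; rewrite !in_itv /= => /andP[h1 h2]; apply/andP; split; lra.
  by apply: wl_open_eq; ring.
- have -> : [set t | `]a, b[%classic (c + -1 * t)] = `]c - b, c - a[%classic.
    by apply/seteqP; split => x /=; rewrite !in_itv /= => /andP[h1 h2]; apply/andP; split; lra.
  by apply: wl_open_eq; ring.
Qed.

Lemma negl_pre (N : set R) (c s : R) : (s = 1 \/ s = -1) ->
  (@lebesgue_measure R).-negligible N ->
  (@lebesgue_measure R).-negligible [set t | N (c + s * t)].
Proof.
move=> hs /negligible_outer_measure N0; apply/negligible_outer_measure.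
apply/eqP; rewrite eq_le outer_measure_ge0 andbT.
by rewrite -N0 outer_pre.
Qed.

End M.

Section D.
Context {R : realType} {n : nat}.
Local Notation V := 'rV[R]_n.

Lemma aff_diff (c s τ : R) : differentiable (fun t : R => c + s * t) τ.
Proof.
apply/derivable1_diffP.
have -> : (fun t : R => c + s * t) = (cst c) + (s \*: id) by apply/funext => t /=.
apply: derivableD; first exact: derivable_cst.
by apply: derivableZ; exact: derivable_id.
Qed.

Lemma deriv_affine (phi : R -> V) (c s τ : R) :
  derivable phi (c + s * τ) 1 ->
  derivable (fun t => phi (c + s * t)) τ 1 /\
  'D_1 (fun t => phi (c + s * t)) τ = s *: 'D_1 phi (c + s * τ).
Proof.
move=> dp.
have dphi : differentiable phi (c + s * τ) by apply/derivable1_diffP.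
have dq : differentiable (phi \o (fun t : R => c + s * t)) τ.
  by apply: differentiable_comp => //; exact: aff_diff.
split; first exact/derivable1_diffP.
rewrite deriveE // diff_comp //; 
rewrite /= [in RHS]deriveE //.
have -> : 'd (fun t : R => c + s * t) τ 1 = s.
  rewrite -deriveE; last exact: aff_diff.
  have -> : (fun t : R => c + s * t) = (cst c) + (s \*: id) by apply/funext => t /=.
  rewrite deriveD; [|exact: derivable_cst|by apply: derivableZ; exact: derivable_id].
  rewrite derive_cst deriveZ; last exact: derivable_id.
  by rewrite derive_id add0r [_%:A]mulr1.
by rewrite -linearZ /= [_ *: _]mulr1.
Qed.

End D.

Section AC.
Context {R : realType} {n : nat}.
Local Notation V := 'rV[R]_n.
Implicit Types phi psi : R -> V.

Lemma ac_ext a b phi psi : abs_cont_on a b phi ->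
  (forall t, a <= t <= b -> phi t = psi t) -> abs_cont_on a b psi.
Proof.
move=> ac E e e0; have [d d0 H] := ac e e0; exists d => // m s t st dj sm.
have E' : forall k, psi (t k) - psi (s k) = phi (t k) - phi (s k).
  move=> k; have [h1 [h2 h3]] := st k.
  by rewrite !E //; apply/andP; split => //; lra.
under eq_bigr => k _ do rewrite E'.
exact: H.
Qed.

Lemma ac_sub a b a' b' phi : abs_cont_on a b phi -> a <= a' -> b' <= b ->
  abs_cont_on a' b' phi.
Proof.
move=> ac ha hb e e0; have [d d0 H] := ac e e0; exists d => // m s t st dj sm.
apply: H => //; move=> k; have [h1 [h2 h3]] := st k; split; [lra|split; lra].
Qed.

Lemma ac_shift a b c phi : abs_cont_on a b phi ->
  abs_cont_on (a - c) (b - c) (fun t => phi (c + t)).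
Proof.
move=> ac e e0; have [d d0 H] := ac e e0; exists d => // m s t st dj sm.
have := H m (fun k => c + s k) (fun k => c + t k).
apply.
- move=> k; have [h1 [h2 h3]] := st k; split; [lra|split; lra].
- move=> k l kl; have := dj k l kl; lra.
- have E : \sum_(k < m) (c + t k - (c + s k)) = \sum_(k < m) (t k - s k).
    by apply: eq_bigr => k _; ring.
  by rewrite E.
Qed.

Lemma ac_refl a b c phi : abs_cont_on a b phi ->
  abs_cont_on (c - b) (c - a) (fun t => phi (c - t)).
Proof.
move=> ac e e0; have [d d0 H] := ac e e0; exists d => // m s t st dj sm.
have := H m (fun k => c - t k) (fun k => c - s k).
have E1 : \sum_(k < m) enorm (phi (c - s k) - phi (c - t k)) =
          \sum_(k < m) enorm (phi (c - t k) - phi (c - s k)).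
  by apply: eq_bigr => k _; rewrite -enormN opprB.
rewrite E1; apply.
- move=> k; have [h1 [h2 h3]] := st k; split; [lra|split; lra].
- move=> k l kl; have := dj k l kl; lra.
- have E : \sum_(k < m) (c - s k - (c - t k)) = \sum_(k < m) (t k - s k).
    by apply: eq_bigr => k _; ring.
  by rewrite E.
Qed.

Lemma ac_concat a b m phi : a <= m -> m <= b ->
  abs_cont_on a m phi -> abs_cont_on m b phi -> abs_cont_on a b phi.
Proof.
move=> am mb ac1 ac2 e e0.
have e20 : 0 < e / 2 by rewrite divr_gt0.
have [d1 d10 H1] := ac1 _ e20; have [d2 d20 H2] := ac2 _ e20.
exists (Num.min d1 d2); first by rewrite lt_min d10 d20.
move=> k s t st dj sm.
have Hl := H1 k (fun i => Num.min (s i) m) (fun i => Num.min (t i) m).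
have Hr := H2 k (fun i => Num.max (s i) m) (fun i => Num.max (t i) m).
have monomin : forall x y, x <= y -> Num.min x m <= Num.min y m.
  move=> x y xy; rewrite le_min !ge_min lexx orbT andbT.
  by rewrite xy.
have monomax : forall x y, x <= y -> Num.max x m <= Num.max y m.
  move=> x y xy; rewrite ge_max !le_max lexx orbT andbT.
  by rewrite xy.
have le1 : \sum_(i < k) (Num.min (t i) m - Num.min (s i) m) <= \sum_(i < k) (t i - s i).
  apply: ler_sum => i _ /=; have [h1 [h2 h3]] := st i.
  by have [tm|mt] := leP (t i) m; have [sm'|ms] := leP (s i) m; lra.
have le2 : \sum_(i < k) (Num.max (t i) m - Num.max (s i) m) <= \sum_(i < k) (t i - s i).
  apply: ler_sum => i _ /=; have [h1 [h2 h3]] := st i.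
  by have [tm|mt] := leP (t i) m; have [sm'|ms] := leP (s i) m; lra.
have m1 : Num.min d1 d2 <= d1 by rewrite ge_min lexx.
have m2 : Num.min d1 d2 <= d2 by rewrite ge_min lexx orbT.
have {Hl}Hl := Hl ltac:(move=> i; have [h1 [h2 h3]] := st i;
    split; [by rewrite le_min h1 am|split; [exact: monomin|by rewrite ge_min lexx orbT]])
  ltac:(move=> i j ij; case: (dj i j ij) => h; [left|right]; exact: monomin)
  ltac:(lra).
have {Hr}Hr := Hr ltac:(move=> i; have [h1 [h2 h3]] := st i;
    split; [by rewrite le_max lexx orbT|split; [exact: monomax|by rewrite ge_max h3 mb]])
  ltac:(move=> i j ij; case: (dj i j ij) => h; [left|right]; exact: monomax)
  ltac:(lra).
apply: (@le_lt_trans _ _ (\sum_(i < k) enorm (phi (Num.min (t i) m) - phi (Num.min (s i) m)) +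
    \sum_(i < k) enorm (phi (Num.max (t i) m) - phi (Num.max (s i) m)))); last by lra.
rewrite -big_split; apply: ler_sum => i _ /=; have [h1 [h2 h3]] := st i.
have [tm|mt] := leP (t i) m; have [sm'|ms] := leP (s i) m.
- by rewrite subrr enorm0 addr0.
- lra.
- rewrite addrC; have -> : phi (t i) - phi (s i) = (phi (t i) - phi m) + (phi m - phi (s i)) by rewrite addrA subrK.
  exact: enormD.
- by rewrite subrr enorm0 add0r.
Qed.

Lemma ac_add_aff a b phi (A B : V) : abs_cont_on a b phi ->
  abs_cont_on a b (fun t => phi t + A + t *: B).
Proof.
move=> ac e e0.
have e20 : 0 < e / 2 by rewrite divr_gt0.
have [d1 d10 H1] := ac _ e20.
have hB : 0 < enorm B + 1 by rewrite ltr_wpDl ?enorm_ge0.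
pose d2 := e / 2 / (enorm B + 1).
have d20 : 0 < d2 by rewrite divr_gt0.
exists (Num.min d1 d2); first by rewrite lt_min d10 d20.
move=> k s t st dj sm.
have m1 : Num.min d1 d2 <= d1 by rewrite ge_min lexx.
have m2 : Num.min d1 d2 <= d2 by rewrite ge_min lexx orbT.
have H := H1 k s t st dj ltac:(lra).
apply: (@le_lt_trans _ _ (\sum_(i < k) enorm (phi (t i) - phi (s i)) +
   \sum_(i < k) (t i - s i) * enorm B)).
  rewrite -big_split; apply: ler_sum => i _ /=; have [h1 [h2 h3]] := st i.
  have -> : phi (t i) + A + t i *: B - (phi (s i) + A + s i *: B) =
     (phi (t i) - phi (s i)) + (t i - s i) *: B.
    by apply/matrixP => ? ?; rewrite !mxE; ring.
  apply: (le_trans (enormD _ _)); rewrite enormZ ger0_norm //; lra.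
rewrite -mulr_suml.
have hs : (\sum_(i < k) (t i - s i)) * enorm B <= e / 2.
  apply: (@le_trans _ _ (d2 * (enorm B + 1))).
    have hsum0 : 0 <= \sum_(i < k) (t i - s i).
      by apply: sumr_ge0 => i _; have [h1 [h2 h3]] := st i; lra.
    have := enorm_ge0 B; nra.
  by rewrite /d2 divfK // gt_eqF.
lra.
Qed.

Lemma ac_cont a b phi : abs_cont_on a b phi -> forall x, a <= x <= b ->
  forall e, 0 < e -> exists2 d, 0 < d & forall y, a <= y <= b -> `|y - x| < d ->
    enorm (phi y - phi x) < e.
Proof.
move=> ac x /andP[ax xb] e e0; have [d d0 H] := ac e e0; exists d => // y /andP[ay yb] yx.
have := H 1%N (fun _ => Num.min x y) (fun _ => Num.max x y).
rewrite !big_ord1 /=.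
have [xy|yx'] := leP x y => HH.
  apply: HH.
  - by move=> k; split; lra.
  - by move=> k l; rewrite !ord1 eqxx.
  - by move: yx; rewrite ger0_norm ?subr_ge0.
rewrite -enormN opprB; apply: HH.
- by move=> k; split; lra.
- by move=> k l; rewrite !ord1 eqxx.
- by move: yx; rewrite ltr0_norm ?subr_lt0 // opprB.
Qed.

End AC.

Section H.
Context {R : realType} {n : nat}.
Local Notation V := 'rV[R]_n.

Lemma nbhs_enorm (x : V) r : 0 < r -> nbhs x [set y | enorm (y - x) < r].
Proof.
move=> r0; apply/nbhs_ballP.
have n1 : 0 < (n.+1)%:R :> R by rewrite ltr0n.
exists (r / (n.+1)%:R); first exact: divr_gt0.
move=> y; rewrite -ball_normE /= => hy.
apply: (le_lt_trans (enorm_le_mxnorm _)).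
have hy' : `|y - x| < r / (n.+1)%:R by rewrite -normrN opprB.
have h0 : 0 <= `|y - x| by [].
have hn : (n%:R : R) < (n.+1)%:R by rewrite ltr_nat.
have hn0 : (0 : R) <= n%:R by rewrite ler0n.
apply: (@le_lt_trans _ _ (n.+1%:R * `|y - x|)).
  by apply: ler_wpM2r => //; rewrite ltW.
by rewrite -ltr_pdivlMl // mulrC.
Qed.

Lemma enorm_of_nbhs (x : V) (A : set V) : nbhs x A ->
  exists2 r, 0 < r & forall y, enorm (y - x) < r -> A y.
Proof.
move=> /nbhs_ballP [e e0 H]; exists e => // y hy; apply: H.
rewrite -ball_normE /=; rewrite -normrN opprB.
exact: le_lt_trans (mxnorm_le_enorm _) hy.
Qed.

Lemma R_of_nbhs (x : R) (A : set R) : nbhs x A ->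
  exists2 r, 0 < r & forall y, `|y - x| < r -> A y.
Proof.
move=> /nbhs_ballP [e e0 H]; exists e => // y hy; apply: H.
by rewrite -ball_normE /= -normrN opprB.
Qed.

Lemma nbhs_R (x : R) r : 0 < r -> nbhs x [set y | `|y - x| < r].
Proof.
move=> r0; apply/nbhs_ballP; exists r => // y; rewrite -ball_normE /=.
by rewrite -normrN opprB.
Qed.

Lemma open_enorm_ball (c : V) r : open [set v | enorm (v - c) < r].
Proof.
move=> v /= hv; have h0 : 0 < r - enorm (v - c) by rewrite subr_gt0.
apply: filterS (nbhs_enorm v _ h0) => y /= hy.
have -> : y - c = (y - v) + (v - c) by rewrite addrA subrK.
apply: le_lt_trans (enormD _ _) _; lra.
Qed.

Lemma two_point (F : V -> set V) : usc F -> lsc F -> (forall x, compact (F x)) ->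
  forall x0 m, 0 < m ->
  exists2 r, 0 < r & forall x' q, enorm (x' - x0) < r -> enorm (q - x0) < r ->
    forall v, F x' v -> exists2 v', F q v' & enorm (v - v') < m.
Proof.
move=> hu hl hc x0 m m0.
have m20 : 0 < m / 2 by rewrite divr_gt0.
have m40 : 0 < m / 4 by rewrite divr_gt0.
pose U := [set v | exists2 w, F x0 w & enorm (v - w) < m / 2].
have oU : open U.
  move=> v [w Fw hv]; have h0 : 0 < m / 2 - enorm (v - w) by rewrite subr_gt0.
  apply: filterS (nbhs_enorm v _ h0) => y /= hy; exists w => //.
  have -> : y - w = (y - v) + (v - w) by rewrite addrA subrK.
  apply: le_lt_trans (enormD _ _) _; lra.
have FU : F x0 `<=` U by move=> w Fw; exists w => //; rewrite subrr enorm0.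
have [r1 r10 H1] := enorm_of_nbhs _ _ (hu x0 U oU FU).
pose P := fun (q : V) (w : V) => exists2 v', F q v' & enorm (w - v') < m / 2.
have cov : \forall q \near x0, F x0 `<=` P q.
  apply: ((iffLR (compact_near_coveringP (F x0))) (hc x0) V (nbhs x0) P _) => w0 Fw0.
  have lb := hl x0 [set v | enorm (v - w0) < m / 4] (open_enorm_ball w0 (m / 4))
    ltac:(by exists w0; split => //; rewrite /= subrr enorm0).
  exists ([set w | enorm (w - w0) < m / 4], [set q | F q `&` [set v | enorm (v - w0) < m / 4] !=set0]).
    by split => //; exact: nbhs_enorm.
  move=> [w q] /= [hw [v' [Fv' hv']]]; exists v' => //.
  have -> : w - v' = (w - w0) - (v' - w0) by rewrite opprB addrA subrK.
  apply: le_lt_trans (enormB _ _) _; move: hw hv'; rewrite /= => hw hv'; lra.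
have [r2 r20 H2] := enorm_of_nbhs _ _ cov.
exists (Num.min r1 r2); first by rewrite lt_min r10 r20.
move=> x' q hx' hq v Fv.
have [w Fw hvw] : U v.
  by apply: (H1 x') => //; apply: lt_le_trans hx' _; rewrite ge_min lexx.
have hq2 : enorm (q - x0) < r2 by apply: lt_le_trans hq _; rewrite ge_min lexx orbT.
have [v' Fv' hwv'] := H2 q hq2 w Fw.
exists v' => //.
have -> : v - v' = (v - w) + (w - v') by rewrite addrA subrK.
apply: le_lt_trans (enormD _ _) _; lra.
Qed.

End H.

Section U.
Context {R : realType} {n : nat}.
Local Notation V := 'rV[R]_n.

Lemma cont_ball (f : V -> R) (x : V) e : continuous f -> 0 < e ->
  exists2 r, 0 < r & forall y, enorm (y - x) < r -> `|f y - f x| < e.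
Proof.
move=> cf e0; have := cf x [set z | `|z - f x| < e] (nbhs_R _ _ e0).
by move=> /enorm_of_nbhs [r r0 H]; exists r.
Qed.

Lemma ncw (K : set R) : compact K -> near_covering_within K.
Proof. by move=> cK; apply/near_covering_withinP/compact_near_coveringP. Qed.

Lemma near0_pos (Q : R -> Prop) : (\forall x \near (0:R), Q x) -> exists2 x, 0 < x & Q x.
Proof.
move=> /R_of_nbhs [r r0 H]; exists (r / 2); first by rewrite divr_gt0.
by apply: H; rewrite subr0 gtr0_norm ?divr_gt0 //; lra.
Qed.

Definition pcont (L : R) (p : R -> V) := forall τ, 0 <= τ <= L -> forall e, 0 < e ->
  exists2 d, 0 < d & forall τ', 0 <= τ' <= L -> `|τ' - τ| < d -> enorm (p τ' - p τ) < e.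

Lemma margin (L : R) (p : R -> V) (g : V -> R) : continuous g -> (forall x, 0 < g x) ->
  pcont L p -> exists2 m, 0 < m & forall τ, 0 <= τ <= L -> 4 * m <= g (p τ).
Proof.
move=> cg gpos pc.
have K := @ncw `[0, L] (@segment_compact R 0 L) R (nbhs (0:R))
   (fun μ τ => 4 * μ <= g (p τ)) _.
have [|m m0 Hm] := near0_pos _ (K _ _).
  move=> τ0; rewrite /= in_itv /= => hτ0.
  have g0 := gpos (p τ0).
  have g40 : 0 < g (p τ0) / 4 by rewrite divr_gt0.
  have [ρ ρ0 Hρ] := cont_ball g (p τ0) _ cg g40.
  have [d d0 Hd] := pc τ0 hτ0 ρ ρ0.
  have g80 : 0 < g (p τ0) / 8 by rewrite divr_gt0.
  exists ([set τ | `|τ - τ0| < d], [set μ | `|μ - 0| < g (p τ0) / 8]).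
    by split; apply: nbhs_R.
  move=> [τ μ] /= [hτ hμ]; rewrite in_itv /= => hτL.
  have := Hρ _ (Hd τ hτL hτ).
  move: hμ; rewrite subr0 => hμ.
  have := ler_norm μ; rewrite !ltr_norml.
  move=> h1 /andP[h2 h3]; lra.
by exists m => // τ hτ; apply: Hm; rewrite /= in_itv.
Qed.

Lemma unif (F : V -> set V) : usc F -> lsc F -> (forall x, compact (F x)) ->
  forall (eps ebar : V -> R), continuous eps -> continuous ebar ->
  forall L (p : R -> V), pcont L p -> forall m, 0 < m ->
  (forall τ, 0 <= τ <= L -> 4 * m <= ebar (p τ) - eps (p τ)) ->
  exists2 η, 0 < η & forall τ, 0 <= τ <= L -> forall q, enorm (q - p τ) < η ->
   (forall v, F (p τ) v -> exists2 v', F q v' & enorm (v - v') < m) /\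
   eps (p τ) + 2 * m <= ebar q.
Proof.
move=> hu hl hc eps ebar ce cb L p pc m m0 hm.
have K := @ncw `[0, L] (@segment_compact R 0 L) R (nbhs (0:R))
   (fun η τ => forall q, enorm (q - p τ) < η ->
   (forall v, F (p τ) v -> exists2 v', F q v' & enorm (v - v') < m) /\
   eps (p τ) + 2 * m <= ebar q) _.
have [|η η0 Hη] := near0_pos _ (K _ _).
  move=> τ0; rewrite /= in_itv /= => hτ0.
  have [r r0 Hr] := two_point F hu hl hc (p τ0) m m0.
  have [ρ1 ρ10 H1] := cont_ball ebar (p τ0) _ cb m0.
  have [ρ2 ρ20 H2] := cont_ball eps (p τ0) _ ce m0.
  pose s := Num.min r (Num.min ρ1 ρ2) / 2.
  have s0 : 0 < s by rewrite divr_gt0 // !lt_min r0 ρ10 ρ20.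
  have sr : 2 * s <= r by rewrite /s mulrC divfK ?ge_min ?lexx // pnatr_eq0.
  have sρ1 : 2 * s <= ρ1 by rewrite /s mulrC divfK ?ge_min ?lexx ?orbT // pnatr_eq0.
  have sρ2 : 2 * s <= ρ2 by rewrite /s mulrC divfK ?ge_min ?lexx ?orbT // pnatr_eq0.
  have [d d0 Hd] := pc τ0 hτ0 s s0.
  exists ([set τ | `|τ - τ0| < d], [set η | `|η - 0| < s]).
    by split; apply: nbhs_R.
  move=> [τ η] /= [hτ hη]; rewrite in_itv /= => hτL q hq.
  have hpτ := Hd τ hτL hτ.
  move: hη; rewrite subr0 => hη.
  have hηs : η < s by apply: le_lt_trans (ler_norm η) hη.
  have hqx : enorm (q - p τ0) < 2 * s.
    have -> : q - p τ0 = (q - p τ) + (p τ - p τ0) by rewrite addrA subrK.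
    apply: le_lt_trans (enormD _ _) _; lra.
  have hpx : enorm (p τ - p τ0) < r by lra.
  split.
    by apply: Hr => //; lra.
  have := H1 q ltac:(lra); have := H2 (p τ) ltac:(lra).
  have := hm τ0 hτ0.
  rewrite !ltr_norml => h0 /andP[h1 h2] /andP[h3 h4]; lra.
by exists η => // τ hτ; apply: Hη; rewrite /= in_itv.
Qed.

End U.

Section S.
Context {R : realType} {n : nat}.
Local Notation V := 'rV[R]_n.
Local Notation mu := (@lebesgue_measure R).

Definition good (G : V -> set V) (phi : R -> V) (t : R) :=
  derivable phi t 1 /\ G (phi t) ('D_1 phi t).

Definition path_ok (G : V -> set V) (L : R) (p : R -> V) :=
  [/\ 0 < L, abs_cont_on 0 L p & {ae mu, forall t, 0 < t < L -> good G p t}].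

Lemma aeE (P : R -> Prop) : {ae mu, forall t, P t} = mu.-negligible (~` [set t | P t]).
Proof. by []. Qed.

Lemma sol_sub (G : V -> set V) (D : set R) (phi : R -> V) a b : is_solution G D phi -> D a -> D b ->
  forall t, a <= t <= b -> D t.
Proof. by case=> Di _ _ _ Da Db t ht; apply: (Di a b). Qed.

Lemma reparam_fwd (G : V -> set V) (D : set R) (phi : R -> V) a b : is_solution G D phi -> D a -> D b -> a < b ->
  path_ok G (b - a) (fun τ => phi (a + τ)).
Proof.
move=> sol Da Db ab; have sub := sol_sub _ _ _ _ _ sol Da Db.
case: (sol) => _ _ hac hae.
split; first by rewrite subr_gt0.
  have := ac_shift a b a phi (hac a b (ltW ab) (fun t ht => sub t ht)).
  by rewrite subrr.
rewrite aeE in hae *.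
apply: negligibleS (negl_pre _ a 1 (or_introl erefl) hae) => τ /= nh hg; apply: nh => hτ.
have Dx : D (a + 1 * τ) by apply: sub; rewrite mul1r; lra.
have [d1 d2] := hg Dx.
have [h1 h2] := deriv_affine phi a 1 τ d1.
have E : (fun t => phi (a + 1 * t)) = (fun t => phi (a + t)).
  by apply/funext => t; rewrite mul1r.
rewrite E in h1 h2; split => //; rewrite h2 scale1r; rewrite mul1r in d2 *; exact: d2.
Qed.

Lemma reparam_bwd (G : V -> set V) (D : set R) (phi : R -> V) a b : is_solution G D phi -> D a -> D b -> a < b ->
  path_ok (fun x v => G x (- v)) (b - a) (fun τ => phi (b - τ)).
Proof.
move=> sol Da Db ab; have sub := sol_sub _ _ _ _ _ sol Da Db.
case: (sol) => _ _ hac hae.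
split; first by rewrite subr_gt0.
  have := ac_refl a b b phi (hac a b (ltW ab) (fun t ht => sub t ht)).
  by rewrite subrr.
rewrite aeE in hae *.
apply: negligibleS (negl_pre _ b (-1) (or_intror erefl) hae) => τ /= nh hg; apply: nh => hτ.
have Dx : D (b + -1 * τ) by apply: sub; rewrite mulN1r; lra.
have [d1 d2] := hg Dx.
have [h1 h2] := deriv_affine phi b (-1) τ d1.
have E : (fun t => phi (b + -1 * t)) = (fun t => phi (b - t)).
  by apply/funext => t; rewrite mulN1r.
rewrite E in h1 h2; split => //; rewrite h2 scaleN1r opprK; rewrite mulN1r in d2 *; exact: d2.
Qed.

End S.

Section C.
Context {R : realType} {n : nat}.
Local Notation V := 'rV[R]_n.
Local Notation mu := (@lebesgue_measure R).

Lemma negl1 (a : R) : mu.-negligible [set a].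
Proof. by apply/negligibleP; [exact: measurable_set1|exact: lebesgue_measure_set1]. Qed.

Lemma near_lt (t s : R) : t < s -> \forall x \near t, x < s.
Proof.
move=> ts; have h : 0 < s - t by rewrite subr_gt0.
apply: filterS (nbhs_R t _ h) => x /=; rewrite ltr_norml; lra.
Qed.

Lemma near_gt (t s : R) : s < t -> \forall x \near t, s < x.
Proof.
move=> ts; have h : 0 < t - s by rewrite subr_gt0.
apply: filterS (nbhs_R t _ h) => x /=; rewrite ltr_norml; lra.
Qed.

Lemma good_near (G : V -> set V) (f g : R -> V) t :
  (\forall x \near t, f x = g x) -> good G f t -> good G g t.
Proof.
move=> fg [d1 d2].
have ft : f t = g t := nbhs_singleton fg.
split; first exact: near_eq_derivable fg d1.
by rewrite -ft -(@near_eq_derive _ _ _ f g t 1 fg).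
Qed.

Lemma concat (G : V -> set V) (Dp : set R) (psi : R -> V) (s L : R) (chi : R -> V) :
  is_solution G Dp psi -> Dp s -> 0 <= s -> path_ok G L chi -> chi 0 = psi s ->
  is_solution G [set t | (Dp t /\ t <= s) \/ (s <= t <= s + L)]
     (fun t => if t <= s then psi t else chi (t - s)).
Proof.
move=> sol Ds s0 [L0 acx aex] c0.
case: (sol) => Di D0 hac hae.
set Dt := [set t | _ \/ _]; set th := fun t => _.
have hL : forall t, Dt t -> t <= s -> Dp t.
  move=> t [[]//|/andP[h1 h2]] ts; have -> : t = s by lra.
  exact: Ds.
have hR : forall t, Dt t -> s <= t -> t <= s + L.
  by move=> t [[_ h]|/andP[h1 h2]] st //; lra.
have thL : forall t, t <= s -> th t = psi t by move=> t ts; rewrite /th ts.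
have thR : forall t, s <= t -> th t = chi (- s + t).
  move=> t st; rewrite /th; case: ifP => ts.
    have -> : t = s by lra.
    by rewrite addNr c0.
  by rewrite addrC.
have acL : forall a b, a <= b -> b <= s -> `[a, b] `<=` Dt -> abs_cont_on a b th.
  move=> a b ab bs sub.
  apply: ac_ext (hac a b ab _) _.
    by move=> t ht; apply: hL; [exact: sub|move: ht; rewrite /= in_itv /= => /andP[_ h]; lra].
  by move=> t /andP[_ h]; rewrite thL //; lra.
have acR : forall a b, a <= b -> s <= a -> b <= s + L -> abs_cont_on a b th.
  move=> a b ab sa bL.
  have := ac_shift 0 L (- s) chi acx; rewrite !opprK add0r => h.
  apply: ac_ext (ac_sub _ _ _ _ _ h sa _) _; first by rewrite addrC.
  by move=> t /andP[h1 h2]; rewrite thR //; lra.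
split => //.
- move=> x y Dx Dy z /andP[xz zy].
  have [zs|sz] := leP z s.
    left; split => //.
    have Dx' : Dp x by apply: hL => //; lra.
    have [ys|sy] := leP y s.
      by apply: (Di x y Dx' (hL y Dy ys)); rewrite xz zy.
    by apply: (Di x s Dx' Ds); rewrite xz zs.
  right; rewrite /= (ltW sz) /=; have := hR y Dy ltac:(lra); lra.
- by rewrite /Dt /=; left.
- move=> a b ab sub.
  have Da : Dt a by apply: sub; rewrite /= in_itv /= lexx ab.
  have Db : Dt b by apply: sub; rewrite /= in_itv /= lexx ab.
  have [bs|sb] := leP b s; first exact: acL.
  have bL : b <= s + L by apply: hR => //; lra.
  have [sa|a_s] := leP s a; first exact: acR.
  apply: (ac_concat a b s th); [lra|lra| |apply: acR; lra].
  apply: acL => //; [lra| ].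
  by move=> t; rewrite /= in_itv /= => /andP[h1 h2]; apply: sub; rewrite /= in_itv /=; apply/andP; split; lra.
- rewrite aeE in hae aex *.
  have N := negligibleU (negligibleU hae (negl1 s)) (negligibleU (negl1 (s + L)) (negl_pre _ (- s) 1 (or_introl erefl) aex)).
  apply: negligibleS N => t /= nh.
  apply: contrapT => hn; apply: nh => Dtt.
  have ts : t != s by apply/eqP => ts; apply: hn; left; right.
  have tsL : t != s + L by apply/eqP => ts'; apply: hn; right; left.
  have [lts|gts] := ltP t s.
    have gp : good G psi t.
      by apply: contrapT => ng; apply: hn; left; left => /(_ (hL t Dtt (ltW lts))).
    apply: good_near gp; apply: filterS (near_lt t s lts) => x xs.
    by rewrite thL // ltW.
  have st : s < t by rewrite lt_neqAle eq_sym ts gts.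
  have tL : t < s + L by rewrite lt_neqAle tsL hR // ltW.
  have gc : good G chi (- s + 1 * t).
    apply: contrapT => ng; apply: hn; right; right => /(_ _) h; apply: ng; apply: h.
    rewrite mul1r; apply/andP; split; lra.
  case: gc => d1 d2.
  have [h1 h2] := deriv_affine chi (- s) 1 t d1.
  have gq : good G (fun x => chi (- s + 1 * x)) t by split => //; rewrite h2 scale1r.
  apply: good_near gq; apply: filterS (near_gt t s st) => x xs.
  by rewrite thR ?mul1r // ltW.
Qed.

End C.

Section Z.
Context {R : realType} {n : nat}.
Local Notation V := 'rV[R]_n.
Local Notation mu := (@lebesgue_measure R).
Local Notation P := (set R * (R -> V))%type.

Definition ext (p q : P) := p.1 `<=` q.1 /\ forall t, p.1 t -> q.2 t = p.2 t.

Lemma ext_refl p : ext p p. Proof. by split. Qed.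
Lemma ext_trans p q r : ext p q -> ext q r -> ext p r.
Proof.
move=> [s1 e1] [s2 e2]; split; first by move=> t /s1 /s2.
by move=> t pt; rewrite e2 ?e1 //; exact: s1.
Qed.

Lemma subsingleton_negl (S : set R) : (forall x y, S x -> S y -> x = y) -> mu.-negligible S.
Proof.
move=> h; have [[x Sx]|S0] := pselect (S !=set0).
  by apply: negligibleS (negl1 x) => y Sy; rewrite /= (h y x).
have -> : S = set0 by apply/seteqP; split => y // Sy; exfalso; apply: S0; exists y.
exact: negligible_set0.
Qed.

Variable G : V -> set V.

Lemma chain_ub (A : set P) : A !=set0 -> (forall a, A a -> is_solution G a.1 a.2) ->
  (forall a b, A a -> A b -> ext a b \/ ext b a) ->
  exists u : P, is_solution G u.1 u.2 /\ forall a, A a -> ext a u.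
Proof.
move=> [a0 Aa0] Asol Ach.
pose Ds := [set t | exists2 a, A a & a.1 t].
pose th := fun t => if pselect (exists a, A a /\ a.1 t) is left h then (proj1_sig (cid h)).2 t
                    else (0 : V).
have agree : forall a, A a -> forall t, a.1 t -> th t = a.2 t.
  move=> a Aa t at_; rewrite /th; case: pselect => [h|h]; last by exfalso; apply: h; exists a.
  case: cid => b /= [Ab bt].
  by case: (Ach a b Aa Ab) => [[_ e]|[_ e]]; rewrite e.
have common : forall a b, A a -> A b -> exists2 c, A c & a.1 `<=` c.1 /\ b.1 `<=` c.1.
  move=> a b Aa Ab; case: (Ach a b Aa Ab) => [[s _]|[s _]].
    by exists b => //; split.
  by exists a => //; split.
have Dsi : is_interval Ds.
  move=> x y [a Aa ax] [b Ab bx] z hz.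
  have [c Ac [ac bc]] := common a b Aa Ab.
  by exists c => //; case: (Asol c Ac) => ci _ _ _; apply: (ci x y); [exact: ac|exact: bc|].
exists (Ds, th); split; last first.
  move=> a Aa; split; first by move=> t at_; exists a.
  by move=> t at_; exact: agree.
split => //.
- by case: (Asol a0 Aa0) => _ ? _ _; exists a0.
- move=> a b ab sub.
  have [c1 Ac1 c1a] : Ds a by apply: sub; rewrite /= in_itv /= lexx ab.
  have [c2 Ac2 c2b] : Ds b by apply: sub; rewrite /= in_itv /= lexx ab.
  have [c Ac [s1 s2]] := common c1 c2 Ac1 Ac2.
  case: (Asol c Ac) => ci _ hac _.
  have subc : `[a, b] `<=` c.1.
    by move=> t; rewrite /= in_itv /= => ht; apply: (ci a b); [exact: s1|exact: s2|].
  apply: ac_ext (hac a b ab subc) _ => t ht /=; rewrite (agree c Ac) //.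
  by apply: subc; rewrite /= in_itv /=.
- rewrite aeE.
  pose bad := fun c : P => ~` [set t | c.1 t -> good G c.2 t].
  pose Fk := fun k : nat => match @unpickle (rat * rat)%type k with
    | Some q => if pselect (exists c, A c /\ c.1 (ratr q.1) /\ c.1 (ratr q.2)) is left h
                then bad (proj1_sig (cid h)) else set0
    | None => set0 end.
  have Fn : forall k, mu.-negligible (Fk k).
    move=> k; rewrite /Fk; case: unpickle => [q|]; last exact: negligible_set0.
    case: pselect => [h|_]; last exact: negligible_set0.
    case: cid => c /= [Ac _]; case: (Asol c Ac) => _ _ _; rewrite aeE; exact.
  pose E := [set t | Ds t /\ forall u, Ds u -> t <= u] `|` [set t | Ds t /\ forall u, Ds u -> u <= t].
  have En : mu.-negligible E.
    apply: negligibleU; apply: subsingleton_negl => x y [Dx hx] [Dy hy];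
      apply/eqP; rewrite eq_le ?hx ?hy //.
  apply: negligibleS (negligibleU En (@negligible_bigcup _ _ _ mu Fk Fn)) => t /= nh.
  apply: contrapT => hn; apply: nh => Dt.
  have [u1 Du1 u1t] : exists2 u1, Ds u1 & u1 < t.
    apply: contrapT => h; apply: hn; left; left; split => // u Du.
    by rewrite leNgt; apply/negP => ut; apply: h; exists u.
  have [u2 Du2 tu2] : exists2 u2, Ds u2 & t < u2.
    apply: contrapT => h; apply: hn; left; right; split => // u Du.
    by rewrite leNgt; apply/negP => ut; apply: h; exists u.
  have [q1 hq1] := rat_in_itvoo u1t; have [q2 hq2] := rat_in_itvoo tu2.
  move: hq1 hq2; rewrite !in_itv /= => /andP[a1 b1] /andP[a2 b2].
  have Dq1 : Ds (ratr q1) by apply: (Dsi u1 t Du1 Dt); rewrite (ltW a1) ltW.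
  have Dq2 : Ds (ratr q2) by apply: (Dsi t u2 Dt Du2); rewrite (ltW a2) ltW.
  have hex : exists c, A c /\ c.1 (ratr (q1, q2).1) /\ c.1 (ratr (q1, q2).2).
    case: Dq1 => c1 Ac1 c1q; case: Dq2 => c2 Ac2 c2q.
    have [c Ac [s1 s2]] := common c1 c2 Ac1 Ac2.
    by exists c; split => //; split; [exact: s1|exact: s2].
  apply: contrapT => ng; apply: hn; right; exists (pickle (q1, q2)); first exact: I.
  rewrite /Fk pickleK; case: pselect => [h|//].
  case: cid => c /= [Ac [cq1 cq2]].
  have ci : is_interval c.1 by case: (Asol c Ac).
  have ct : c.1 t by apply: (ci _ _ cq1 cq2); rewrite (ltW b1) ltW.
  move=> /(_ ct) gc; apply: ng.
  apply: (good_near G c.2 th t) => //.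
  apply: filterS (filterI (near_gt t (ratr q1) b1) (near_lt t (ratr q2) a2)) => x [x1 x2].
  rewrite (agree c Ac) //; apply: (ci _ _ cq1 cq2).
  by rewrite (ltW x1) ltW.
Qed.

Lemma extend_max (D : set R) (th : R -> V) : is_solution G D th ->
  exists D' th', [/\ maximal_solution G (th 0) D' th', D `<=` D' &
    forall t, D t -> th' t = th t].
Proof.
move=> sol.
pose T := {p : P | is_solution G p.1 p.2 /\ ext (D, th) p}.
have t0 : T by exists (D, th); split => //; exact: ext_refl.
pose r := fun a b : T => `[< ext (proj1_sig a) (proj1_sig b) >].
have [t tmax] : exists t, premaximal r t.
  apply: (ZL_preorder t0).
  - by move=> a; apply/asboolP; exact: ext_refl.
  - by move=> a b c /asboolP ab /asboolP bc; apply/asboolP; exact: ext_trans ab bc.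
  move=> A Atot.
  have [[a Aa]|A0] := pselect (A !=set0); last first.
    by exists t0 => a Aa; exfalso; apply: A0; exists a.
  have := chain_ub [set proj1_sig x | x in A] _ _ _.
  case.
  - by exists (proj1_sig a); exists a.
  - by move=> _ [x Ax <-]; case: (proj2_sig x).
  - move=> _ _ [x Ax <-] [y Ay <-].
    by case: (Atot x y Ax Ay) => /asboolP h; [left|right].
  move=> u [usol uext].
  have ue : ext (D, th) u.
    by apply: ext_trans (proj2 (proj2_sig a)) (uext _ _); exists a.
  exists (exist _ u (conj usol ue)) => x Ax; apply/asboolP.
  by apply: uext; exists x.
case: t tmax => [[D' th'] H] tmax; case: (H) => sol' ext'.
exists D', th'; split; last first.
- by move=> s Ds; case: ext' => _ /(_ s Ds).
- by case: ext'.
split => //.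
  by case: ext' => s e; apply: (e 0); case: sol.
move=> [D'' [psi [sol'' [sub' nsub] agr]]].
have e2 : ext (D, th) (D'', psi).
  apply: ext_trans ext' _; split => //.
have := tmax (exist _ (D'', psi) (conj sol'' e2)).
move=> /(_ _)/asboolP; case; first by apply/asboolP; split.
by move=> h _; apply: nsub.
Qed.

End Z.

Section P.
Context {R : realType} {n : nat}.
Local Notation V := 'rV[R]_n.
Local Notation mu := (@lebesgue_measure R).

Lemma deriv_aff2 (p : R -> V) (A B : V) τ : derivable p τ 1 ->
  derivable (fun t => p t + A + t *: B) τ 1 /\
  'D_1 (fun t => p t + A + t *: B) τ = 'D_1 p τ + B.
Proof.
move=> dp.
have dw : differentiable (fun k : R => k *: B) τ.
  exact: (@ex_diff _ _ _ _ _ _ _ (@is_diff_scalel _ _ τ B)).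
have dw' : derivable (fun k : R => k *: B) τ 1 by apply/derivable1_diffP.
have E : (fun t => p t + A + t *: B) = (p + cst A) + (fun k : R => k *: B).
  by apply/funext => t.
have dpa : derivable (p + cst A) τ 1 := derivableD dp (derivable_cst A τ 1).
rewrite E; split; first exact: derivableD.
rewrite (deriveD dpa dw') (deriveD dp (derivable_cst A τ 1)).
rewrite derive_cst addr0; congr (_ + _).
have dv : 'd (fun k : R => k *: B) τ = (fun k : R => k *: B) :> (R -> V) :=
  (@diff_val _ _ _ _ _ _ _ (@is_diff_scalel _ _ τ B)).
by rewrite (deriveE _ dw) dv scale1r.
Qed.

Lemma perturb (F : V -> set V) (eps ebar : V -> R) L (p : R -> V) m η (A B : V) :
  path_ok (inflate F eps) L p -> (forall x, 0 <= eps x) -> (forall x, 0 < ebar x) ->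
  (forall τ, 0 <= τ <= L -> forall q, enorm (q - p τ) < η ->
     (forall v, F (p τ) v -> exists2 v', F q v' & enorm (v - v') < m) /\
     eps (p τ) + 2 * m <= ebar q) ->
  (forall τ, 0 <= τ <= L -> enorm (A + τ *: B) < η) -> enorm B <= m ->
  path_ok (inflate F ebar) L (fun τ => p τ + A + τ *: B).
Proof.
move=> [L0 ac ae] eps0 ebar0 Hη hA hB; split => //; first exact: ac_add_aff.
rewrite aeE in ae *; apply: negligibleS ae => τ /= nh hg; apply: nh => hτ.
have [dp [y Fy [b bb eq]]] := hg hτ.
have [dχ Dχ] := deriv_aff2 p A B τ dp.
split => //; rewrite Dχ -eq.
have hτ' : 0 <= τ <= L by case/andP: hτ => h1 h2; apply/andP; split; lra.
set q := p τ + A + τ *: B.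
have hq : enorm (q - p τ) < η.
  have -> : q - p τ = A + τ *: B by apply/matrixP => ? ?; rewrite !mxE; ring.
  exact: hA.
have [hH hm] := Hη τ hτ' q hq.
have [y' Fy' hyy'] := hH y Fy.
set c := (y - y') + eps (p τ) *: b + B.
have hc : enorm c <= ebar q.
  apply: (le_trans (enormD _ _)); apply: le_trans (lerD (enormD _ _) (lexx _)) _.
  rewrite enormZ ger0_norm //.
  have bb' : enorm b <= 1 := bb.
  have := eps0 (p τ); nra.
have eq0 : ebar q != 0 by rewrite gt_eqF.
exists y' => //; exists ((ebar q)^-1 *: c).
  rewrite /unit_ball /= enormZ ger0_norm; last by rewrite invr_ge0 ltW.
  by rewrite -(ler_pM2l (ebar0 q)) mulrA divff // mul1r mulr1.
rewrite scalerA divff // scale1r /c.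
by apply/matrixP => ? ?; rewrite !mxE; ring.
Qed.
End P.

Section K.
Context {R : realType} {n : nat}.
Local Notation V := 'rV[R]_n.
Local Notation mu := (@lebesgue_measure R).

Lemma path_pcont G L (p : R -> V) : path_ok G L p -> pcont L p.
Proof.
move=> [L0 ac _] τ hτ e e0.
have [d d0 H] := ac_cont 0 L p ac τ hτ e e0.
by exists d.
Qed.

Lemma key (F : V -> set V) : usc F -> lsc F -> (forall x, compact (F x)) ->
  forall (Xo : set V) (ebar eps : V -> R), continuous ebar -> continuous eps ->
  (forall x, 0 <= eps x) -> (forall x, 0 < ebar x) -> (forall x, eps x < ebar x) ->
  forall L (p : R -> V), path_ok (inflate F eps) L p ->
  closure (Kset F ebar Xo) (p 0) -> interior (Kset F ebar Xo) (p L).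
Proof.
move=> hu hl hc Xo ebar eps cb ce eps0 ebar0 lt L p pok cl.
have pc := path_pcont _ _ _ pok.
have [L0 _ _] := pok.
have cg : continuous (fun x => ebar x - eps x).
  by move=> x; apply: continuousB; [exact: cb|exact: ce].
have [m m0 hm] := margin L p (fun x => ebar x - eps x) cg
  ltac:(by move=> x; rewrite subr_gt0) pc.
have [η η0 Hη] := unif F hu hl hc eps ebar ce cb L p pc m m0 hm.
pose ρ := Num.min (η / 4) (m * L / 2).
have ρ0 : 0 < ρ by rewrite lt_min !divr_gt0 // mulr_gt0.
have ρη : ρ <= η / 4 by rewrite ge_min lexx.
have ρm : ρ <= m * L / 2 by rewrite ge_min lexx orbT.
have [y [Ky hy]] := cl _ (nbhs_enorm (p 0) ρ ρ0).
move: hy => /= hy.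
case: Ky => t0 [t00 [x Xx [D [psi [msol [s [Ds s0 st0 ys]]]]]]].
case: (msol) => sol psi0 _.
apply: filterS (nbhs_enorm (p L) ρ ρ0) => z /= hz.
pose A := y - p 0.
pose B := L^-1 *: (z - p L - A).
have hAn : enorm A < ρ by [].
have hBn : enorm B < 2 * ρ / L.
  rewrite /B enormZ ger0_norm ?invr_ge0 ?ltW //.
  have h := enormB (z - p L) A.
  rewrite mulrC ltr_pM2r ?invr_gt0 //; lra.
have hB : enorm B <= m.
  apply: ltW; apply: lt_le_trans hBn _.
  rewrite ler_pdivrMr //; lra.
have hA : forall τ, 0 <= τ <= L -> enorm (A + τ *: B) < η.
  move=> τ /andP[h1 h2].
  apply: le_lt_trans (enormD _ _) _; rewrite enormZ ger0_norm //.
  have : τ * enorm B <= L * (2 * ρ / L).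
    by apply: ler_pM => //; [exact: enorm_ge0|exact: ltW].
  rewrite [L * _]mulrC divfK ?gt_eqF //; lra.
have chok := perturb F eps ebar L p m η A B pok eps0 ebar0 Hη hA hB.
have c0 : p 0 + A + 0 *: B = psi s by rewrite scale0r addr0 /A addrC subrK ys.
have csol := concat _ D psi s L _ sol Ds s0 chok c0.
have [D' [th' [msol' sub' agr']]] := extend_max _ _ _ csol.
exists (s + L); split; first lra.
exists x => //.
exists D', th'; split.
  move: msol'; rewrite /=.
  have -> : (if 0 <= s then psi 0 else p (0 - s) + A + (0 - s) *: B) = x by rewrite s0.
  done.
exists (s + L); split => //; first by apply: sub'; right; rewrite lerDl ltW //= lexx.
- lra.
- rewrite agr' /=; last by right; rewrite lerDl ltW //= lexx.
  have -> : (s + L <= s) = false by apply/negbTE; rewrite -ltNge ltrDl.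
  have -> : s + L - s = L by ring.
  rewrite /B scalerA divff ?gt_eqF // scale1r /A.
  by apply/matrixP => ? ?; rewrite !mxE; ring.
Qed.

End K.


Lemma inflate_neg {R : realType} {n : nat} (F : 'rV[R]_n -> set 'rV[R]_n) eps x v :
  inflate (negmap F) eps x (- v) -> inflate F eps x v.
Proof.
move=> [y [f Ff <-] [b bb e]]; exists f => //; exists (- b).
  by rewrite /unit_ball /= enormN.
by rewrite scalerN -[v]opprK -e opprD opprK.
Qed.

Lemma path_ok_mono {R : realType} {n : nat} (G1 G2 : 'rV[R]_n -> set 'rV[R]_n) L p :
  (forall x v, G1 x v -> G2 x v) -> path_ok G1 L p -> path_ok G2 L p.
Proof.
move=> h [L0 ac ae]; split => //; rewrite aeE in ae *.
apply: negligibleS ae => t /= nh hg; apply: nh => ht.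
by have [d g] := hg ht; split => //; exact: h.
Qed.

Theorem lemma7 (R : realType) (n : nat) (F : 'rV[R]_n -> set 'rV[R]_n) :
  (forall x, F x !=set0 /\ compact (F x) /\ convex_set_rV (F x)) ->
  sv_continuous F ->
  forward_complete F ->
  forall (Xo : set 'rV[R]_n) (ebar : 'rV[R]_n -> R),
  continuous ebar -> (forall x, 0 < ebar x) ->
  forall eps : 'rV[R]_n -> R, continuous eps -> (forall x, 0 <= eps x) ->
  (forall x, eps x < ebar x) ->
  let K := Kset F ebar Xo in
  [/\ forward_contractive (inflate F eps) (closure K),
      forward_contractive (inflate (negmap F) eps) (~` interior K),
      (forall D phi, is_solution (inflate F eps) D phi -> interior K (phi 0) ->
         forall t, D t -> 0 < t -> ~ boundary K (phi t)) &
      (forall D phi, is_solution (inflate F eps) D phi -> (~` closure K) (phi 0) ->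
         forall t, D t -> t < 0 -> ~ boundary K (phi t))].
Proof.
move=> hF [hu hl] _ Xo ebar cb ebar0 eps ce eps0 lt K.
have hc : forall x, compact (F x) by move=> x; case: (hF x) => _ [].
have keyK := key F hu hl hc Xo ebar eps cb ce eps0 ebar0 lt.
have fwd : forall D phi, is_solution (inflate F eps) D phi -> forall a b, D a -> D b -> a < b ->
    closure K (phi a) -> interior K (phi b).
  move=> D phi sol a b Da Db ab cla.
  have := keyK _ _ (reparam_fwd _ _ _ a b sol Da Db ab).
  by rewrite addr0 addrC subrK; apply.
have bwd : forall D phi, is_solution (inflate (negmap F) eps) D phi -> forall a b, D a -> D b -> a < b ->
    closure K (phi b) -> interior K (phi a).
  move=> D phi sol a b Da Db ab clb.
  have := keyK _ _ (path_ok_mono _ _ _ _ (@inflate_neg _ _ F eps) (reparam_bwd _ _ _ a b sol Da Db ab)).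
  by rewrite subr0 opprB addrC subrK; apply.
have intcl : forall x, interior K x -> closure K x.
  by move=> x /interior_subset /subset_closure.
split.
- split; first exact: closed_closure.
    move=> D phi sol cl0 t Dt t0.
    have [->|tne] := eqVneq t 0; first exact: cl0.
    have t0' : 0 < t by rewrite lt_neqAle eq_sym tne t0.
    by apply: intcl; apply: (fwd D phi sol 0 t) => //; case: sol.
  move=> x0 [clx0 _] D phi [sol phi0 _]; exists 1 => // t Dt t0 _.
  have : interior K (phi t).
    apply: (fwd D phi sol 0 t) => //; first by case: sol.
    by rewrite phi0; exact: closed_closure.
  by apply: filterS; exact: subset_closure.
- split; first exact: open_closedC (open_interior K).
    move=> D phi sol ni0 t Dt t0.
    have [->|tne] := eqVneq t 0; first exact: ni0.
    have t0' : 0 < t by rewrite lt_neqAle eq_sym tne t0.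
    move=> it; apply: ni0; apply: (bwd D phi sol 0 t) => //; first by case: sol.
    exact: intcl.
  move=> x0 [clx0 _] D phi [sol phi0 _]; exists 1 => // t Dt t0 _.
  have nx0 : ~ interior K x0 by apply: (open_closedC (open_interior K)).
  have ncl : ~ closure K (phi t).
    move=> cl; apply: nx0; rewrite -phi0; apply: (bwd D phi sol 0 t) => //.
    by case: sol.
  have : nbhs (phi t) (~` closure K) by exact: (closed_openC (@closed_closure _ K)) _ ncl.
  apply: filterS => y ny iy; apply: ny; exact: intcl.
- move=> D phi sol i0 t Dt t0 [_ nit]; apply: nit.
  by apply: (fwd D phi sol 0 t) => //; [case: sol|exact: intcl].
- move=> D phi sol ncl0 t Dt t0 [clt _]; apply: ncl0.
  by apply: intcl; apply: (fwd D phi sol t 0) => //; case: sol.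
Qed.
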